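(* Let $\Gamma>0$. For $M\ge1$ and $s>\sqrt M$ define $$\tilde\rho^{M,{\rm d}}(s)=\frac{e^{\beta f(\Gamma,1/\pi)}}{M^{\Gamma/4}}\exp\Big(-\frac{M\Gamma}{2}\Big(\frac{s^2}{M}-1\Big)+M\Gamma\log\frac{s}{\sqrt M}-\frac\Gamma2\log\Big(\frac{s^2}{M}-1\Big)\Big),$$ and for $s<0$ define $$\tilde\rho^{M,{\rm c}}(s)=\Big(\frac{2\pi}{\sqrt M}\Big)^{\Gamma/2}e^{\beta f(\Gamma,1)}\frac{e^{-\Gamma\pi s^2+\Gamma\pi s/\sqrt M}}{(1-e^{4\pi s/\sqrt M})^{\Gamma/2}}.$$ Then for every fixed $y<0$, $$\lim_{N\to\infty}\tilde\rho^{N+1,{\rm d}}\big(\sqrt N-y\big)=\lim_{N\to\infty}\frac1\pi\,\tilde\rho^{N,{\rm c}}\big(y/\sqrt\pi\big)=e^{\beta f(\Gamma,1/\pi)}\frac{e^{-\Gamma y^2}}{(2|y|)^{\Gamma/2}}.$$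
   Context: $\beta f(\Gamma,\rho_b)$ is the dimensionless free energy per particle of the two-dimensional one-component plasma at coupling $\Gamma$ and background density $\rho_b$: $\beta f(\Gamma,\rho_b)=\lim_{N\to\infty}-\frac1N\log Z^{\rm d}_{N,\Gamma}(\rho_b)$ with $Z^{\rm d}_{N,\Gamma}(\rho_b)=\frac1{N!}\int_{(\mathbb R^2)^N}e^{-\Gamma N^2(\frac12\log R-\frac38)}e^{-\pi\Gamma\rho_b\sum_j|\vec r_j|^2/2}\prod_{j<k}|\vec r_k-\vec r_j|^\Gamma\,d\vec r_1\cdots d\vec r_N$, $R=\sqrt{N/(\pi\rho_b)}$. It is known that $\beta f(\Gamma,\rho_b)=(1-\frac\Gamma4)\log\rho_b+g(\Gamma)$ for a function $g$ independent of $\rho_b$. The functions $\tilde\rho^{M,{\rm d}}$ and $\tilde\rho^{M,{\rm c}}$ are the large-deviation forms (without the $o(1)$ terms) of the one-body density outside the plasma in the soft disk ($\rho_b=1/\pi$, unscaled radial coordinate $s$) and soft cylinder ($\rho_b=1$, $L=W=\sqrt M$, unscaled axial coordinate $s$) respectively. *)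

(* Defs.v *)
From Stdlib Require Import Reals Lra.
From Coquelicot Require Import Coquelicot.
Open Scope R_scope.

Definition free_energy_scaling (bf : R -> R -> R) : Prop :=
  exists g : R -> R, forall G rho, 0 < G -> 0 < rho ->
    bf G rho = (1 - G / 4) * ln rho + g G.

(* Large-deviation form of the density outside the soft disk
   (rho_b = 1/pi), radial coordinate s > sqrt M. *)
Definition rho_d (bf : R -> R -> R) (G M s : R) : R :=
  exp (bf G (/ PI)) / Rpower M (G / 4) *
  exp (- (M * G / 2) * (s ^ 2 / M - 1) + M * G * ln (s / sqrt M)
       - G / 2 * ln (s ^ 2 / M - 1)).

(* Large-deviation form of the density outside the soft cylinder
   (rho_b = 1, L = W = sqrt M), axial coordinate s < 0. *)
Definition rho_c (bf : R -> R -> R) (G M s : R) : R :=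
  Rpower (2 * PI / sqrt M) (G / 2) * exp (bf G 1) *
  exp (- G * PI * s ^ 2 + G * PI * s / sqrt M) /
  Rpower (1 - exp (4 * PI * s / sqrt M)) (G / 2).

(* Main.v *)
Require Import Defs.
From Stdlib Require Import Reals Lra Lia.
From Coquelicot Require Import Coquelicot.
Open Scope R_scope.

Lemma cont_ln x : 0 < x -> continuity_pt ln x.
Proof. intro Hx. apply derivable_continuous_pt. exists (/x). now apply derivable_pt_lim_ln. Qed.

Lemma cont_exp x : continuity_pt exp x.
Proof. apply derivable_continuous_pt. apply derivable_pt_exp. Qed.

Lemma ln_bound u : 0 <= u -> 0 <= ln (1 + u) - u + u ^ 2 / 2 <= u ^ 3.
Proof.
  intro Hu.
  set (f := fun x => ln (1 + x) - x + x ^ 2 / 2).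
  assert (D : forall x, 0 <= x -> is_derive f x (/ (1 + x) - 1 + x)).
  { intros x Hx. unfold f. auto_derive. lra. field. lra. }
  destruct (MVT_gen f 0 u (fun x => / (1 + x) - 1 + x)) as [c [Hc E]].
  - intros x Hx. apply D. rewrite Rmin_left in Hx by lra. lra.
  - intros x Hx. rewrite Rmin_left in Hx by lra. apply continuity_pt_filterlim.
    apply (ex_derive_continuous f). eexists. apply D. lra.
  - rewrite Rmin_left in Hc by lra. rewrite Rmax_right in Hc by lra.
    unfold f in E. rewrite Rplus_0_r, ln_1 in E.
    assert (E2 : ln (1 + u) - u + u ^ 2 / 2 = (/ (1 + c) - 1 + c) * u) by lra.
    rewrite E2.
    set (d := / (1 + c)).
    assert (Hd : d * (1 + c) = 1) by (unfold d; field; lra).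
    assert (Hd0 : 0 < d) by (unfold d; apply Rinv_0_lt_compat; lra).
    assert (K : d - 1 + c = d * c ^ 2) by nra.
    rewrite K. split.
    + apply Rmult_le_pos; [|lra]. apply Rmult_le_pos; nra.
    + assert (d <= 1) by nra.
      assert (d * c^2 <= u^2) by nra. nra.
Qed.

Lemma lim_z : is_lim_seq (fun N => / (INR N + 1)) 0.
Proof.
  assert (H : is_lim_seq (fun N => INR N + 1) p_infty).
  { pose proof is_lim_seq_INR as HI. apply (is_lim_seq_incr_1 INR p_infty) in HI.
    eapply is_lim_seq_ext; [|exact HI]. intro n. simpl. apply S_INR. }
  apply is_lim_seq_inv in H; [|discriminate]. exact H.
Qed.

Lemma lim_w : is_lim_seq (fun N => / sqrt (INR N + 1)) 0.
Proof.
  eapply is_lim_seq_ext. intro n. apply sqrt_inv.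
  replace 0 with (sqrt 0) by apply sqrt_0.
  apply is_lim_seq_continuous. apply continuity_pt_sqrt; lra. apply lim_z.
Qed.

Lemma lim_v : is_lim_seq (fun N => sqrt (1 - / (INR N + 1))) 1.
Proof.
  assert (P0 : 0 <= 1 - 0) by lra.
  assert (H := is_lim_seq_continuous sqrt (fun N => 1 - / (INR N + 1)) (1 - 0)
     (continuity_pt_sqrt _ P0)
     (is_lim_seq_minus' _ _ 1 0 (is_lim_seq_const 1) lim_z)).
  rewrite Rminus_0_r, sqrt_1 in H. exact H.
Qed.

Lemma lim_h : is_lim_seq (fun N => / sqrt (INR N)) 0.
Proof.
  eapply is_lim_seq_ext. intro n. apply sqrt_inv.
  replace 0 with (sqrt 0) by apply sqrt_0.
  apply is_lim_seq_continuous. apply continuity_pt_sqrt; lra.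
  pose proof (is_lim_seq_inv _ _ is_lim_seq_INR) as H. apply H. discriminate.
Qed.

Lemma disk_id (bf : R -> R -> R) (G a : R) (N : nat) :
  0 < a ->
  let z := / (INR N + 1) in
  let w := / sqrt (INR N + 1) in
  let v := sqrt (1 - z) in
  let q := 2 * a * v + (a ^ 2 - 1) * w in
  let u := q * w in
  0 < q ->
  rho_d bf G (INR N + 1) (sqrt (INR N) - - a) =
  exp (bf G (/ PI)) * exp (G / 2 * ((INR N + 1) * (ln (1 + u) - u + u ^ 2 / 2) - q ^ 2 / 2)
                           - G / 2 * ln q).
Proof.
  intros Ha z w v q u Hq.
  assert (HN : 0 <= INR N) by apply pos_INR.
  set (M := INR N + 1). set (x := sqrt (INR N)). set (sm := sqrt M).
  assert (HM : 0 < M) by (unfold M; lra).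
  assert (Hx : x * x = INR N) by (apply sqrt_sqrt; lra).
  assert (Hx0 : 0 <= x) by apply sqrt_pos.
  assert (Hsm : sm * sm = M) by (apply sqrt_sqrt; lra).
  assert (Hsm0 : 0 < sm) by (apply sqrt_lt_R0; lra).
  assert (Hw : w = / sm) by reflexivity.
  assert (Hw0 : 0 < w) by (rewrite Hw; apply Rinv_0_lt_compat; lra).
  assert (Hv : v = x * w).
  { unfold v, z, x. rewrite Hw. unfold sm. rewrite <- sqrt_inv, <- sqrt_mult by
      (try apply Rlt_le, Rinv_0_lt_compat; lra).
    f_equal. unfold M. field. lra. }
  assert (Hu : (x + a) ^ 2 / M - 1 = u).
  { unfold u, q. rewrite Hv, Hw.
    replace ((x + a) ^ 2) with (sm * sm + (2 * a * x + a ^ 2 - 1))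
      by (rewrite Hsm; unfold M; rewrite <- Hx; ring).
    rewrite <- Hsm. field. lra. }
  assert (Hu0 : 0 < u) by (unfold u; nra).
  assert (Hs0 : 0 < (x + a) / sm) by (apply Rdiv_lt_0_compat; lra).
  assert (H1 : ln ((x + a) / sm) = ln (1 + u) / 2).
  { rewrite <- Hu. replace (1 + ((x + a) ^ 2 / M - 1)) with (((x + a) / sm) ^ 2)
      by (rewrite <- Hsm; field; lra).
    rewrite ln_pow by exact Hs0. simpl. field. }
  assert (H2 : ln u = ln q + ln w) by (unfold u; apply ln_mult; lra).
  assert (H3 : ln M = - (2 * ln w)).
  { replace 2 with (INR 2) by (simpl; ring). rewrite <- ln_pow by exact Hw0.
    rewrite <- (Rinv_inv M), ln_Rinv by (apply Rinv_0_lt_compat; lra). f_equal. f_equal.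
    rewrite Hw, <- Hsm. simpl. field. lra. }
  assert (H4 : M * u ^ 2 = q ^ 2).
  { unfold u. rewrite Hw, <- Hsm. field. lra. }
  unfold rho_d. fold M. fold x. replace (x - - a) with (x + a) by ring. fold sm.
  rewrite Hu, H1, H2. unfold Rpower. rewrite H3.
  unfold Rdiv at 1. rewrite <- exp_Ropp, Rmult_assoc, <- exp_plus.
  f_equal. f_equal. rewrite <- H4.
  clearbody u q v w z sm x M. field.
Qed.

Lemma disk_lim (bf : R -> R -> R) (G y : R) : y < 0 ->
  is_lim_seq (fun N : nat => rho_d bf G (INR N + 1) (sqrt (INR N) - y))
    (exp (bf G (/ PI)) * exp (- G * y ^ 2) / Rpower (2 * Rabs y) (G / 2)).
Proof.
  intro Hy. set (a := - y). assert (Ha : 0 < a) by (unfold a; lra).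
  replace y with (- a) by (unfold a; ring). clearbody a. clear Hy.
  pose (w := fun N : nat => / sqrt (INR N + 1)).
  pose (v := fun N : nat => sqrt (1 - / (INR N + 1))).
  pose (q := fun N : nat => 2 * a * v N + (a ^ 2 - 1) * w N).
  pose (u := fun N : nat => q N * w N).
  pose (Rr := fun N : nat => (INR N + 1) * (ln (1 + u N) - u N + u N ^ 2 / 2)).
  assert (Lq : is_lim_seq q (2 * a)).
  { replace (2 * a) with (2 * a * 1 + (a ^ 2 - 1) * 0) by ring.
    apply is_lim_seq_plus'; apply is_lim_seq_mult'; try apply is_lim_seq_const.
    apply lim_v. apply lim_w. }
  assert (Eq : eventually (fun N => a < q N)).
  { apply is_lim_seq_spec in Lq. destruct (Lq (mkposreal a Ha)) as [N0 HN0].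
    exists N0. intros n Hn. specialize (HN0 n Hn). simpl in HN0.
    apply Rabs_lt_between in HN0. lra. }
  assert (Hw0 : forall N, 0 < w N).
  { intro N. unfold w. apply Rinv_0_lt_compat, sqrt_lt_R0. pose proof (pos_INR N). lra. }
  assert (HMw : forall N, (INR N + 1) * w N ^ 2 = 1).
  { intro N. unfold w. pose proof (pos_INR N).
    assert (E := sqrt_sqrt (INR N + 1) ltac:(lra)).
    assert (0 < sqrt (INR N + 1)) by (apply sqrt_lt_R0; lra).
    rewrite <- E at 1. field. lra. }
  assert (LR : is_lim_seq Rr 0).
  { apply (is_lim_seq_le_le_loc (fun _ => 0) Rr (fun N => q N ^ 3 * w N)).
    - destruct Eq as [N0 HN0]. exists N0. intros n Hn. specialize (HN0 n Hn).
      assert (Hu : 0 <= u n) by (unfold u; specialize (Hw0 n); nra).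
      destruct (ln_bound _ Hu) as [B1 B2]. pose proof (pos_INR n).
      unfold Rr. split. apply Rmult_le_pos; lra.
      apply Rle_trans with ((INR n + 1) * u n ^ 3). apply Rmult_le_compat_l; lra.
      right. unfold u. replace ((INR n + 1) * (q n * w n) ^ 3) with (q n ^ 3 * w n * ((INR n + 1) * w n ^ 2)) by ring. rewrite HMw. ring.
    - apply is_lim_seq_const.
    - replace (Finite 0) with (Finite ((2 * a) ^ 3 * 0)) by (f_equal; ring).
      apply is_lim_seq_mult'. apply (is_lim_seq_continuous (fun t => t ^ 3)).
      apply derivable_continuous_pt. apply derivable_pt_pow. exact Lq. apply lim_w. }
  assert (LL : is_lim_seq (fun N => G / 2 * (Rr N - q N ^ 2 / 2) - G / 2 * ln (q N))
                 (G / 2 * (0 - (2 * a) ^ 2 / 2) - G / 2 * ln (2 * a))).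
  { apply is_lim_seq_minus'; apply (is_lim_seq_scal_l _ (G / 2) (Finite _)).
    - apply is_lim_seq_minus'. exact LR. apply (is_lim_seq_scal_r _ (/2) (Finite _)).
      apply (is_lim_seq_continuous (fun t => t ^ 2)).
      apply derivable_continuous_pt. apply derivable_pt_pow. exact Lq.
    - apply is_lim_seq_continuous. apply cont_ln. lra. exact Lq. }
  apply (is_lim_seq_continuous exp) in LL; [|apply cont_exp].
  apply (is_lim_seq_scal_l _ (exp (bf G (/ PI))) (Finite _)) in LL.
  eapply is_lim_seq_ext_loc in LL.
  - replace (exp (bf G (/ PI)) * exp (- G * (- a) ^ 2) / Rpower (2 * Rabs (- a)) (G / 2))
      with (exp (bf G (/ PI)) *
        (exp (G / 2 * (0 - (2 * a) ^ 2 / 2) - G / 2 * ln (2 * a)))).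
    exact LL.
    rewrite Rabs_left by lra. unfold Rpower.
    replace (- - a) with a by ring. unfold Rdiv.
    rewrite <- exp_Ropp, (Rmult_assoc (exp (bf G (/ PI)))), <- (exp_plus (- G * (- a) ^ 2)).
    f_equal. f_equal. field.
  - destruct Eq as [N0 HN0]. exists N0. intros n Hn. specialize (HN0 n Hn).
    symmetry. apply disk_id. exact Ha. unfold q, v, w in HN0. lra.
Qed.

Lemma exp_combine p q r s t :
  exp p * (exp q * exp r * exp s / exp t) = exp (p + q + r + s - t).
Proof.
  unfold Rminus. rewrite !exp_plus, exp_Ropp. field. apply Rgt_not_eq, exp_pos.
Qed.

Lemma cyl_id (bf : R -> R -> R) (G a : R) (N : nat) :
  0 < a -> (1 <= N)%nat ->
  let s := - a / sqrt PI in
  let h := / sqrt (INR N) in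
  let r := (1 - exp (4 * PI * s * h)) / h in
  / PI * rho_c bf G (INR N) s =
  exp (- ln PI + bf G 1 + G / 2 * ln (2 * PI) - G * a ^ 2 + G * PI * s * h - G / 2 * ln r).
Proof.
  intros Ha HN s h r.
  assert (HN0 : 0 < INR N) by (apply lt_0_INR; lia).
  assert (Hh : 0 < h) by (apply Rinv_0_lt_compat, sqrt_lt_R0; lra).
  assert (Hsp : 0 < sqrt PI) by (apply sqrt_lt_R0, PI_RGT_0).
  assert (Hsp2 : sqrt PI * sqrt PI = PI) by (apply sqrt_sqrt; pose proof PI_RGT_0; lra).
  assert (Hs : s < 0) by (unfold s; unfold Rdiv; assert (0 < / sqrt PI) by (apply Rinv_0_lt_compat; lra); nra).
  assert (Ht : 4 * PI * s * h < 0) by (pose proof PI_RGT_0; assert (PI * s < 0) by nra; nra).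
  assert (Hr : 0 < r).
  { unfold r. apply Rdiv_lt_0_compat; [|lra].
    set (T := 4 * PI * s * h) in *.
    pose proof (exp_ineq1_le (- T)). assert (E := exp_plus T (- T)).
    replace (T + - T) with 0 in E by ring. rewrite exp_0 in E.
    pose proof (exp_pos T). pose proof (exp_pos (-T)). nra. }
  assert (EPI : / PI = exp (- ln PI)) by (rewrite exp_Ropp, exp_ln; [reflexivity|apply PI_RGT_0]).
  assert (E1 : 1 - exp (4 * PI * s * h) = r * h) by (unfold r; field; lra).
  unfold rho_c, Rpower. rewrite EPI.
  replace (2 * PI / sqrt (INR N)) with (2 * PI * h) by reflexivity.
  replace (4 * PI * s / sqrt (INR N)) with (4 * PI * s * h) by reflexivity.
  replace (G * PI * s / sqrt (INR N)) with (G * PI * s * h) by reflexivity.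
  rewrite E1, exp_combine. f_equal.
  rewrite !ln_mult by (pose proof PI_RGT_0; lra).
  replace (- G * PI * s ^ 2) with (- G * a ^ 2) by (unfold s; replace PI with (sqrt PI * sqrt PI) at 1 by exact Hsp2; field; lra).
  field.
Qed.

Lemma cyl_lim (bf : R -> R -> R) (G y : R) :
  free_energy_scaling bf -> 0 < G -> y < 0 ->
  is_lim_seq (fun N : nat => / PI * rho_c bf G (INR N) (y / sqrt PI))
    (exp (bf G (/ PI)) * exp (- G * y ^ 2) / Rpower (2 * Rabs y) (G / 2)).
Proof.
  intros [g Hg] HG Hy. set (a := - y). assert (Ha : 0 < a) by (unfold a; lra).
  replace y with (- a) by (unfold a; ring). clearbody a. clear Hy.
  pose proof PI_RGT_0 as HPI.
  assert (Hsp : 0 < sqrt PI) by (apply sqrt_lt_R0, PI_RGT_0).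
  assert (Hsp2 : sqrt PI * sqrt PI = PI) by (apply sqrt_sqrt; lra).
  set (s := - a / sqrt PI).
  pose (h := fun N : nat => / sqrt (INR N)).
  pose (r := fun N : nat => (1 - exp (4 * PI * s * h N)) / h N).
  set (c := - (4 * PI * s)).
  assert (Hc : c = 4 * sqrt PI * a).
  { unfold c, s. replace PI with (sqrt PI * sqrt PI) at 1 by exact Hsp2. field. lra. }
  assert (Hc0 : 0 < c) by (rewrite Hc; nra).
  assert (Ev : eventually (fun N : nat => 0 < h N)).
  { exists 1%nat. intros n Hn. unfold h. apply Rinv_0_lt_compat, sqrt_lt_R0.
    apply lt_0_INR; lia. }
  assert (Lt : is_lim_seq (fun N => 4 * PI * s * h N) 0).
  { replace (Finite 0) with (Rbar_mult (4 * PI * s) 0) by (simpl; f_equal; ring).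
    apply is_lim_seq_scal_l. apply lim_h. }
  assert (Lr : is_lim_seq r c).
  { apply (is_lim_seq_le_le_loc (fun N => c * exp (4 * PI * s * h N)) r (fun _ => c)).
    - destruct Ev as [N0 HN0]. exists N0. intros n Hn. specialize (HN0 n Hn).
      set (hn := h n) in *. set (T := c * hn).
      assert (ET : 4 * PI * s * hn = - T) by (unfold T, c; ring).
      assert (Erh : r n * hn = 1 - exp (- T)) by (unfold r; fold hn; rewrite ET; field; lra).
      pose proof (exp_ineq1_le (- T)). pose proof (exp_ineq1_le T).
      assert (E := exp_plus T (- T)). replace (T + - T) with 0 in E by ring. rewrite exp_0 in E.
      pose proof (exp_pos T). pose proof (exp_pos (-T)).
      assert (HT : 0 < T) by (unfold T; nra).
      rewrite ET. split.
      + apply (Rmult_le_reg_r hn); [lra|]. rewrite Erh.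
        replace (c * exp (- T) * hn) with (T * exp (- T)) by (unfold T; ring). nra.
      + apply (Rmult_le_reg_r hn); [lra|]. rewrite Erh. fold T. nra.
    - replace (Finite c) with (Rbar_mult c (exp 0)) by (simpl; rewrite exp_0; f_equal; ring).
      apply is_lim_seq_scal_l. apply (is_lim_seq_continuous exp). apply cont_exp. exact Lt.
    - apply is_lim_seq_const. }
  assert (LK : is_lim_seq (fun N => - ln PI + bf G 1 + G / 2 * ln (2 * PI) - G * a ^ 2
                                    + G * PI * s * h N - G / 2 * ln (r N))
      (- ln PI + bf G 1 + G / 2 * ln (2 * PI) - G * a ^ 2 + G * PI * s * 0 - G / 2 * ln c)).
  { apply is_lim_seq_minus'. apply is_lim_seq_plus'. apply is_lim_seq_const.
    apply (is_lim_seq_scal_l _ (G * PI * s) (Finite 0)). apply lim_h.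
    apply (is_lim_seq_scal_l _ (G / 2) (Finite _)).
    apply is_lim_seq_continuous. apply cont_ln; lra. exact Lr. }
  apply (is_lim_seq_continuous exp) in LK; [|apply cont_exp].
  eapply is_lim_seq_ext_loc in LK.
  - replace (exp (bf G (/ PI)) * exp (- G * (- a) ^ 2) / Rpower (2 * Rabs (- a)) (G / 2))
      with (exp (- ln PI + bf G 1 + G / 2 * ln (2 * PI) - G * a ^ 2 + G * PI * s * 0 - G / 2 * ln c)).
    exact LK.
    rewrite Rabs_left by lra. replace (- - a) with a by ring. unfold Rpower.
    unfold Rdiv at 3. rewrite <- exp_Ropp, <- !exp_plus. f_equal.
    rewrite (Hg G (/ PI)), (Hg G 1) by (try apply Rinv_0_lt_compat; lra).
    rewrite ln_1, ln_Rinv by lra.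
    rewrite Hc, !ln_mult by lra.
    replace 4 with (2 * 2) by ring. rewrite ln_mult by lra.
    assert (LP : ln PI = 2 * ln (sqrt PI)) by (rewrite <- Hsp2 at 1; rewrite ln_mult by lra; ring).
    rewrite LP. field.
  - destruct Ev as [N0 HN0]. exists (max 1 N0). intros n Hn.
    symmetry. apply cyl_id. exact Ha. lia.
Qed.

Theorem corollary1 (bf : R -> R -> R) (G y : R) :
  free_energy_scaling bf -> 0 < G -> y < 0 ->
  is_lim_seq (fun N : nat => rho_d bf G (INR N + 1) (sqrt (INR N) - y))
    (exp (bf G (/ PI)) * exp (- G * y ^ 2) / Rpower (2 * Rabs y) (G / 2)) /\
  is_lim_seq (fun N : nat => / PI * rho_c bf G (INR N) (y / sqrt PI))
    (exp (bf G (/ PI)) * exp (- G * y ^ 2) / Rpower (2 * Rabs y) (G / 2)).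
Proof.
  intros Hs HG Hy. split. apply disk_lim; exact Hy. apply cyl_lim; assumption.
Qed.
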